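(* Let $P=2$ and let $X=WH$ with $W=(w_{mp})\in\mathbb{H}_{\mathcal S}^{M\times 2}$ and $H=(h_{pn})\in\mathbb{R}_+^{2\times N}$. Suppose: (C1) there exist $m_1,m_2\in\{1,\dots,M\}$ (not necessarily distinct) such that $I_{m_1 1},I_{m_1 2},I_{m_2 1},I_{m_2 2}>0$ and $$\Phi_{m_1 1}=1,\quad \Phi_{m_1 2}\boldsymbol\mu_{m_1 2}\neq\boldsymbol\mu_{m_1 1},\quad I_{m_1 1}\ge \frac12\,\frac{1-\Phi_{m_1 2}^2}{1-\Phi_{m_1 2}\langle\boldsymbol\mu_{m_1 1},\boldsymbol\mu_{m_1 2}\rangle}\,I_{m_1 2},$$ $$\Phi_{m_2 2}=1,\quad \Phi_{m_2 1}\boldsymbol\mu_{m_2 1}\neq\boldsymbol\mu_{m_2 2},\quad I_{m_2 2}\ge \frac12\,\frac{1-\Phi_{m_2 1}^2}{1-\Phi_{m_2 1}\langle\boldsymbol\mu_{m_2 2},\boldsymbol\mu_{m_2 1}\rangle}\,I_{m_2 1};$$ (C2) there exist $n_1\neq n_2$ in $\{1,\dots,N\}$ with $h_{1n_1}>0$, $h_{2n_1}=0$, $h_{2n_2}>0$, $h_{1n_2}=0$. Then the QNMF $X=WH$ is essentially unique.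
   Context: $\mathbb{H}$ denotes the quaternions; for $q=a+b\mathbf i+c\mathbf j+d\mathbf k$, $\mathrm{Re}\,q=a$, $\mathrm{Im}\,q=b\mathbf i+c\mathbf j+d\mathbf k$, $|\mathrm{Im}\,q|^2=b^2+c^2+d^2$. $\mathbb{H}_{\mathcal S}=\{q\in\mathbb{H}: \mathrm{Re}\,q\ge 0,\ |\mathrm{Im}\,q|^2\le(\mathrm{Re}\,q)^2\}$; $\mathbb{R}_+=[0,\infty)$. Polar parametrization: every $w\in\mathbb{H}_{\mathcal S}$ with $\mathrm{Re}\,w>0$ is written $w=I+I\Phi\boldsymbol\mu$ with intensity $I=\mathrm{Re}\,w>0$, degree of polarization $\Phi=|\mathrm{Im}\,w|/\mathrm{Re}\,w\in[0,1]$, and polarization axis $\boldsymbol\mu$ a pure unit quaternion ($\mathrm{Re}\,\boldsymbol\mu=0$, $|\boldsymbol\mu|=1$), with $\boldsymbol\mu=\mathrm{Im}\,w/|\mathrm{Im}\,w|$ when $\mathrm{Im}\,w\ne0$ (arbitrary otherwise). For the entries of $W$ we write $w_{mp}=I_{mp}+I_{mp}\Phi_{mp}\boldsymbol\mu_{mp}$. For pure quaternions, $\langle\boldsymbol\mu_1,\boldsymbol\mu_2\rangle=-\mathrm{Re}(\boldsymbol\mu_1\boldsymbol\mu_2)$, the Euclidean inner product in $\mathbb{R}^3$. The QNMF $X=WH$ is essentially unique if for every $\tilde W\in\mathbb{H}_{\mathcal S}^{M\times P}$, $\tilde H\in\mathbb{R}_+^{P\times N}$ with $X=\tilde W\tilde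 H$ there exist a diagonal matrix $D$ with strictly positive diagonal entries and a permutation matrix $\Pi$ such that $\tilde W=WD\Pi$ and $\tilde H=(D\Pi)^{-1}H$. *)

(* Defs.v *)
From Stdlib Require Import Reals Lra.
Open Scope R_scope.

Record quat := mkQ { qre : R; qi : R; qj : R; qk : R }.

Definition qadd (p q : quat) : quat :=
  mkQ (qre p + qre q) (qi p + qi q) (qj p + qj q) (qk p + qk q).
Definition qscale (r : R) (q : quat) : quat :=
  mkQ (r * qre q) (r * qi q) (r * qj q) (r * qk q).
Definition qzero : quat := mkQ 0 0 0 0.

Definition Re (q : quat) : R := qre q.
Definition Im (q : quat) : quat := mkQ 0 (qi q) (qj q) (qk q).
Definition ImNorm2 (q : quat) : R := qi q ^ 2 + qj q ^ 2 + qk q ^ 2.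
Definition ImNorm (q : quat) : R := sqrt (ImNorm2 q).

Definition in_HS (q : quat) : Prop := 0 <= Re q /\ ImNorm2 q <= Re q ^ 2.

Definition pure_unit (mu : quat) : Prop :=
  qre mu = 0 /\ qi mu ^ 2 + qj mu ^ 2 + qk mu ^ 2 = 1.

(* <mu1, mu2> = - Re (mu1 mu2) for pure quaternions: Euclidean inner product *)
Definition inner (mu1 mu2 : quat) : R :=
  qi mu1 * qi mu2 + qj mu1 * qj mu2 + qk mu1 * qk mu2.

Definition Intens (w : quat) : R := Re w.
Definition Phi (w : quat) : R := ImNorm w / Re w.

(* mu is a valid polarization axis for w (Re w > 0):
   a pure unit quaternion with w = I + I Phi mu, i.e. Im w = I Phi mu
   (hence mu = Im w/|Im w| when Im w <> 0, arbitrary otherwise). *)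
Definition polar_axis (w mu : quat) : Prop :=
  pure_unit mu /\ Im w = qscale (Intens w * Phi w) mu.

(* Matrices are functions of 0-based indices; only entries with indices
   below the dimensions are meaningful. *)
Fixpoint qmatmul (P : nat) (W : nat -> nat -> quat) (H : nat -> nat -> R)
  (m n : nat) : quat :=
  match P with
  | O => qzero
  | S P' => qadd (qmatmul P' W H m n) (qscale (H P' n) (W m P'))
  end.

Definition W_in_HS (M P : nat) (W : nat -> nat -> quat) : Prop :=
  forall m p, (m < M)%nat -> (p < P)%nat -> in_HS (W m p).

Definition H_nonneg (P N : nat) (H : nat -> nat -> R) : Prop :=
  forall p n, (p < P)%nat -> (n < N)%nat -> 0 <= H p n.

Definition is_perm (P : nat) (sigma : nat -> nat) : Prop :=
  (forall p, (p < P)%nat -> (sigma p < P)%nat) /\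
  (forall p q, (p < P)%nat -> (q < P)%nat -> sigma p = sigma q -> p = q).

(* With D = diag(d) (d_p > 0) and
   the permutation matrix Pi with Pi_{pq} = [p = sigma q]:
     (W D Pi)_{mq} = d_{sigma q} w_{m, sigma q},
     ((D Pi)^{-1} H)_{qn} = h_{sigma q, n} / d_{sigma q}. *)
Definition essentially_unique (M P N : nat) (W : nat -> nat -> quat)
  (H : nat -> nat -> R) : Prop :=
  forall (W' : nat -> nat -> quat) (H' : nat -> nat -> R),
    W_in_HS M P W' -> H_nonneg P N H' ->
    (forall m n, (m < M)%nat -> (n < N)%nat ->
       qmatmul P W H m n = qmatmul P W' H' m n) ->
    exists (d : nat -> R) (sigma : nat -> nat),
      (forall p, (p < P)%nat -> 0 < d p) /\ is_perm P sigma /\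
      (forall m q, (m < M)%nat -> (q < P)%nat ->
         W' m q = qscale (d (sigma q)) (W m (sigma q))) /\
      (forall q n, (q < P)%nat -> (n < N)%nat ->
         H' q n = H (sigma q) n / d (sigma q)).

(* Main.v *)
Require Import Defs.
From Stdlib Require Import Reals Lra Psatz Lia.
Lemma pow_eq_zero_0 (x:R) (n:nat) : x ^ n = 0 -> x = 0.
Proof. intro H. destruct (Req_dec x 0); auto. exfalso; exact (pow_nonzero x n H0 H). Qed.
Open Scope R_scope.

Lemma quat_eq p q : qre p = qre q -> qi p = qi q -> qj p = qj q -> qk p = qk q -> p = q.
Proof. destruct p, q; simpl; intros; subst; reflexivity. Qed.

Lemma Im_comp a r mu : Im a = qscale r mu ->
  qi a = r * qi mu /\ qj a = r * qj mu /\ qk a = r * qk mu.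
Proof. intro H. repeat split;
  [apply (f_equal qi) in H|apply (f_equal qj) in H|apply (f_equal qk) in H]; exact H. Qed.

Definition Lq (mu a : quat) := qre a - inner a mu.

Lemma Lq_nonneg mu a : pure_unit mu -> in_HS a -> 0 <= Lq mu a.
Proof.
  destruct mu as [m0 mi mj mk], a as [a0 ai aj ak].
  unfold pure_unit, in_HS, Lq, inner, Re, ImNorm2; cbn [qre qi qj qk]. intros [_ Hm] [Ha0 Ha].
  pose proof (pow2_ge_0 (ai - a0*mi)). pose proof (pow2_ge_0 (aj - a0*mj)). pose proof (pow2_ge_0 (ak - a0*mk)).
  destruct (Rle_lt_or_eq_dec 0 a0 Ha0) as [Hp|Hz].
  - assert (K: 2*a0*(a0 - (ai*mi+aj*mj+ak*mk)) >= (ai - a0*mi)^2 + (aj - a0*mj)^2 + (ak-a0*mk)^2) by nra.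
    apply Rmult_le_reg_l with (2*a0); lra.
  - subst. assert (ai = 0) by nra. assert (aj = 0) by nra. assert (ak = 0) by nra. subst. lra.
Qed.

Lemma Lq_zero mu a : pure_unit mu -> in_HS a -> Lq mu a = 0 -> Im a = qscale (qre a) mu.
Proof.
  destruct mu as [m0 mi mj mk], a as [a0 ai aj ak].
  unfold pure_unit, in_HS, Lq, inner, Re, ImNorm2; cbn [qre qi qj qk]. intros [Hm0 Hm] [Ha0 Ha] HL.
  assert (Hx: (ai - a0*mi)^2 + (aj - a0*mj)^2 + (ak-a0*mk)^2 =
     (ai^2+aj^2+ak^2) - 2*a0*(ai*mi+aj*mj+ak*mk) + a0^2*(mi^2+mj^2+mk^2)) by ring.
  assert (Hs': ai*mi+aj*mj+ak*mk = a0) by lra.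
  rewrite Hs', Hm in Hx.
  assert (Hs: (ai - a0*mi)^2 + (aj - a0*mj)^2 + (ak-a0*mk)^2 <= 0) by nra.
  pose proof (pow2_ge_0 (ai - a0*mi)). pose proof (pow2_ge_0 (aj - a0*mj)). pose proof (pow2_ge_0 (ak - a0*mk)).
  assert (ai - a0*mi = 0) by (apply (pow_eq_zero_0 (ai - a0*mi) 2); lra).
  assert (aj - a0*mj = 0) by (apply (pow_eq_zero_0 (aj - a0*mj) 2); lra).
  assert (ak - a0*mk = 0) by (apply (pow_eq_zero_0 (ak - a0*mk) 2); lra).
  subst m0. unfold Im, qscale; simpl. apply quat_eq; simpl; lra.
Qed.

Lemma extreme mu e a b h u0 u1 : pure_unit mu -> in_HS a -> in_HS b -> 0 <= u0 -> 0 <= u1 ->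
  Im e = qscale (qre e) mu ->
  qscale h e = qadd (qscale u0 a) (qscale u1 b) ->
  (u0 = 0 \/ Im a = qscale (qre a) mu) /\ (u1 = 0 \/ Im b = qscale (qre b) mu).
Proof.
  intros Hmu Ha Hb Hu0 Hu1 He Heq.
  pose proof (Lq_nonneg mu a Hmu Ha) as La. pose proof (Lq_nonneg mu b Hmu Hb) as Lb.
  apply Im_comp in He. destruct He as (Ei & Ej & Ek).
  assert (E0 := f_equal qre Heq). assert (E1 := f_equal qi Heq).
  assert (E2 := f_equal qj Heq). assert (E3 := f_equal qk Heq). simpl in *.
  pose proof Hmu as [_ Hm].
  assert (Sum: u0 * Lq mu a + u1 * Lq mu b = 0).
  { unfold Lq, inner. rewrite Ei, Ej, Ek in *.
    transitivity ((u0*qre a+u1*qre b) - qi mu*(u0*qi a+u1*qi b) - qj mu*(u0*qj a+u1*qj b)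
       - qk mu*(u0*qk a+u1*qk b)).
    - ring.
    - rewrite <- E0, <- E1, <- E2, <- E3.
      transitivity (h * qre e - h * qre e * (qi mu ^ 2 + qj mu ^ 2 + qk mu ^ 2)).
      + ring.
      + rewrite Hm; ring. }
  assert (P0 : 0 <= u0 * Lq mu a) by nra. assert (P1 : 0 <= u1 * Lq mu b) by nra.
  split.
  - destruct (Rmult_integral u0 (Lq mu a)) as [H|H]; [lra|left; exact H|right; now apply Lq_zero].
  - destruct (Rmult_integral u1 (Lq mu b)) as [H|H]; [lra|left; exact H|right; now apply Lq_zero].
Qed.

Lemma indep e g mu nu p al be al' be' :
  0 < qre e -> Im e = qscale (qre e) mu -> qre mu = 0 ->
  0 < qre g -> Im g = qscale (qre g * p) nu -> qre nu = 0 -> qscale p nu <> mu ->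
  qadd (qscale al e) (qscale be g) = qadd (qscale al' e) (qscale be' g) -> al = al' /\ be = be'.
Proof.
  intros He0 He Hmu Hg0 Hg Hnu Hne Heq.
  apply Im_comp in He. destruct He as (Ei & Ej & Ek).
  apply Im_comp in Hg. destruct Hg as (Gi & Gj & Gk).
  assert (E0 := f_equal qre Heq). assert (E1 := f_equal qi Heq).
  assert (E2 := f_equal qj Heq). assert (E3 := f_equal qk Heq). simpl in *.
  rewrite Ei, Gi in E1. rewrite Ej, Gj in E2. rewrite Ek, Gk in E3.
  destruct (Req_dec al al') as [Ha|Ha].
  - subst. split; auto. apply Rmult_eq_reg_r with (qre g); lra.
  - exfalso. apply Hne. set (d := al - al').
    assert (Hb : (be' - be) * qre g = d * qre e) by (unfold d; lra).
    assert (Hd : d * qre e <> 0) by (apply Rmult_integral_contrapositive; unfold d; split; lra).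
    apply quat_eq; simpl.
    + rewrite Hnu, Hmu; ring.
    + apply Rmult_eq_reg_l with (d * qre e); auto.
      transitivity ((be' - be) * qre g * (p*qi nu)); [rewrite Hb; ring | unfold d; lra].
    + apply Rmult_eq_reg_l with (d * qre e); auto.
      transitivity ((be' - be) * qre g * (p*qj nu)); [rewrite Hb; ring | unfold d; lra].
    + apply Rmult_eq_reg_l with (d * qre e); auto.
      transitivity ((be' - be) * qre g * (p*qk nu)); [rewrite Hb; ring | unfold d; lra].
Qed.
Lemma mm2 W H m n : qmatmul 2 W H m n =
  qadd (qscale (H 0%nat n) (W m 0%nat)) (qscale (H 1%nat n) (W m 1%nat)).
Proof. apply quat_eq; simpl; ring. Qed.

Lemma L_r0 x a b : qadd (qscale x a) (qscale 0 b) = qscale x a.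
Proof. apply quat_eq; simpl; ring. Qed.
Lemma L_l0 x a b : qadd (qscale 0 a) (qscale x b) = qscale x b.
Proof. apply quat_eq; simpl; ring. Qed.
Lemma L_same x y z w e g : qadd (qscale x (qscale y e)) (qscale z (qscale w e)) =
  qadd (qscale (x*y+z*w) e) (qscale 0 g).
Proof. apply quat_eq; simpl; ring. Qed.
Lemma L_id x y z w e g : qadd (qscale x (qscale y e)) (qscale z (qscale w g)) =
  qadd (qscale (x*y) e) (qscale (z*w) g).
Proof. apply quat_eq; simpl; ring. Qed.
Lemma L_sw x y z w e g : qadd (qscale x (qscale y g)) (qscale z (qscale w e)) =
  qadd (qscale (z*w) e) (qscale (x*y) g).
Proof. apply quat_eq; simpl; ring. Qed.
Lemma L_g h e g : qscale h g = qadd (qscale 0 e) (qscale h g).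
Proof. apply quat_eq; simpl; ring. Qed.
Lemma solve1 h e u a b : qscale h e = qadd (qscale u a) (qscale 0 b) -> u <> 0 -> a = qscale (h/u) e.
Proof. intros E Hu. rewrite L_r0 in E.
  apply quat_eq; simpl; [apply (f_equal qre) in E|apply (f_equal qi) in E|apply (f_equal qj) in E|apply (f_equal qk) in E];
  simpl in E; field_simplify; auto; rewrite E; field; auto. Qed.
Lemma solve2 h e u a b : qscale h e = qadd (qscale 0 a) (qscale u b) -> u <> 0 -> b = qscale (h/u) e.
Proof. intros E Hu. rewrite L_l0 in E.
  apply quat_eq; simpl; [apply (f_equal qre) in E|apply (f_equal qi) in E|apply (f_equal qj) in E|apply (f_equal qk) in E];
  simpl in E; field_simplify; auto; rewrite E; field; auto. Qed.
Lemma par a e mu : Im a = qscale (qre a) mu -> Im e = qscale (qre e) mu -> 0 < qre e ->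
  a = qscale (qre a / qre e) e.
Proof. intros Ha He He0.
  apply Im_comp in Ha. apply Im_comp in He. destruct Ha as (A1&A2&A3), He as (B1&B2&B3).
  apply quat_eq; simpl.
  - field; lra.
  - rewrite A1, B1; field; lra.
  - rewrite A2, B2; field; lra.
  - rewrite A3, B3; field; lra.
Qed.

Theorem proposition3 (M N : nat) (W : nat -> nat -> quat) (H : nat -> nat -> R)
  (mu : nat -> nat -> quat)
  (HW : W_in_HS M 2 W) (HH : H_nonneg 2 N H)
  (Hmu : forall m p, (m < M)%nat -> (p < 2)%nat -> 0 < Intens (W m p) ->
           polar_axis (W m p) (mu m p))
  (m1 m2 : nat) (Hm1 : (m1 < M)%nat) (Hm2 : (m2 < M)%nat)
  (Hpos : 0 < Intens (W m1 0%nat) /\ 0 < Intens (W m1 1%nat) /\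
          0 < Intens (W m2 0%nat) /\ 0 < Intens (W m2 1%nat))
  (C1a : Phi (W m1 0%nat) = 1 /\
         qscale (Phi (W m1 1%nat)) (mu m1 1%nat) <> mu m1 0%nat /\
         Intens (W m1 0%nat) >= 1 / 2 * ((1 - Phi (W m1 1%nat) ^ 2) /
            (1 - Phi (W m1 1%nat) * inner (mu m1 0%nat) (mu m1 1%nat))) * Intens (W m1 1%nat))
  (C1b : Phi (W m2 1%nat) = 1 /\
         qscale (Phi (W m2 0%nat)) (mu m2 0%nat) <> mu m2 1%nat /\
         Intens (W m2 1%nat) >= 1 / 2 * ((1 - Phi (W m2 0%nat) ^ 2) /
            (1 - Phi (W m2 0%nat) * inner (mu m2 1%nat) (mu m2 0%nat))) * Intens (W m2 0%nat))
  (n1 n2 : nat) (Hn1 : (n1 < N)%nat) (Hn2 : (n2 < N)%nat) (Hn12 : n1 <> n2)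
  (C2 : 0 < H 0%nat n1 /\ H 1%nat n1 = 0 /\ 0 < H 1%nat n2 /\ H 0%nat n2 = 0) :
  essentially_unique M 2 N W H.
Proof.
  intros W' H' HW' HH' Heq.
  destruct Hpos as (P10 & P11 & P20 & P21).
  destruct C1a as (Ph10 & Ne1 & _). destruct C1b as (Ph21 & Ne2 & _).
  destruct C2 as (h1p & h1z & h2p & h2z).
  assert (L02 : (0 < 2)%nat) by lia. assert (L12 : (1 < 2)%nat) by lia.
  destruct (Hmu m1 0%nat Hm1 L02 P10) as [PU10 I10].
  destruct (Hmu m1 1%nat Hm1 L12 P11) as [PU11 I11].
  destruct (Hmu m2 0%nat Hm2 L02 P20) as [PU20 I20].
  destruct (Hmu m2 1%nat Hm2 L12 P21) as [PU21 I21].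
  rewrite Ph10, Rmult_1_r in I10. rewrite Ph21, Rmult_1_r in I21.
  unfold Intens, Re in *.
  set (h1 := H 0%nat n1) in *. set (h2 := H 1%nat n2) in *.
  set (u0 := H' 0%nat n1). set (u1 := H' 1%nat n1).
  set (v0 := H' 0%nat n2). set (v1 := H' 1%nat n2).
  assert (Hu0 : 0 <= u0) by (apply HH'; lia). assert (Hu1 : 0 <= u1) by (apply HH'; lia).
  assert (Hv0 : 0 <= v0) by (apply HH'; lia). assert (Hv1 : 0 <= v1) by (apply HH'; lia).
  assert (E1 : forall m, (m < M)%nat -> qscale h1 (W m 0%nat) =
     qadd (qscale u0 (W' m 0%nat)) (qscale u1 (W' m 1%nat))).
  { intros m Hm. pose proof (Heq m n1 Hm Hn1) as E. rewrite !mm2 in E.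
    rewrite h1z, L_r0 in E. exact E. }
  assert (E2 : forall m, (m < M)%nat -> qscale h2 (W m 1%nat) =
     qadd (qscale v0 (W' m 0%nat)) (qscale v1 (W' m 1%nat))).
  { intros m Hm. pose proof (Heq m n2 Hm Hn2) as E. rewrite !mm2 in E.
    rewrite h2z, L_l0 in E. exact E. }
  assert (PU10' := PU10). destruct PU10' as [Q10 _].
  assert (PU11' := PU11). destruct PU11' as [Q11 _].
  assert (PU20' := PU20). destruct PU20' as [Q20 _].
  assert (PU21' := PU21). destruct PU21' as [Q21 _].
  pose proof (fun al be al' be' => indep (W m1 0%nat) (W m1 1%nat) (mu m1 0%nat) (mu m1 1%nat)
     (Phi (W m1 1%nat)) al be al' be' P10 I10 Q10 P11 I11 Q11 Ne1) as IND1.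
  pose proof (fun al be al' be' => indep (W m2 1%nat) (W m2 0%nat) (mu m2 1%nat) (mu m2 0%nat)
     (Phi (W m2 0%nat)) al be al' be' P21 I21 Q21 P20 I20 Q20 Ne2) as IND2.
  assert (HWa : in_HS (W' m1 0%nat)) by (apply HW'; lia).
  assert (HWb : in_HS (W' m1 1%nat)) by (apply HW'; lia).
  assert (HWc : in_HS (W' m2 0%nat)) by (apply HW'; lia).
  assert (HWd : in_HS (W' m2 1%nat)) by (apply HW'; lia).
  destruct (extreme _ _ _ _ _ _ _ PU10 HWa HWb Hu0 Hu1 I10 (E1 m1 Hm1)) as [R1a R1b].
  destruct (extreme _ _ _ _ _ _ _ PU21 HWc HWd Hv0 Hv1 I21 (E2 m2 Hm2)) as [R2a R2b].
  assert (Fuu : ~ (0 < u0 /\ 0 < u1)).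
  { intros [A B]. destruct R1a as [R|R]; [lra|]. destruct R1b as [R'|R']; [lra|].
    pose proof (E2 m1 Hm1) as E. rewrite (par _ _ _ R I10 P10), (par _ _ _ R' I10 P10) in E.
    rewrite (L_same _ _ _ _ _ (W m1 1%nat)), (L_g _ (W m1 0%nat)) in E.
    destruct (IND1 _ _ _ _ E). lra. }
  assert (Fvv : ~ (0 < v0 /\ 0 < v1)).
  { intros [A B]. destruct R2a as [R|R]; [lra|]. destruct R2b as [R'|R']; [lra|].
    pose proof (E1 m2 Hm2) as E. rewrite (par _ _ _ R I21 P21), (par _ _ _ R' I21 P21) in E.
    rewrite (L_same _ _ _ _ _ (W m2 0%nat)), (L_g _ (W m2 1%nat)) in E.
    destruct (IND2 _ _ _ _ E). lra. }
  assert (Fu : ~ (u0 = 0 /\ u1 = 0)).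
  { intros [A B]. pose proof (f_equal qre (E1 m1 Hm1)) as E. simpl in E.
    rewrite A, B in E. nra. }
  assert (Fv : ~ (v0 = 0 /\ v1 = 0)).
  { intros [A B]. pose proof (f_equal qre (E2 m1 Hm1)) as E. simpl in E.
    rewrite A, B in E. nra. }
  destruct (Rle_lt_or_eq_dec 0 u0 Hu0) as [U0|U0];
  destruct (Rle_lt_or_eq_dec 0 u1 Hu1) as [U1|U1];
  destruct (Rle_lt_or_eq_dec 0 v0 Hv0) as [V0|V0];
  destruct (Rle_lt_or_eq_dec 0 v1 Hv1) as [V1|V1];
  try (exfalso; apply Fuu; split; assumption);
  try (exfalso; apply Fvv; split; assumption);
  try (exfalso; apply Fu; split; symmetry; assumption);
  try (exfalso; apply Fv; split; symmetry; assumption).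
  - (* u0>0, u1=0, v0>0, v1=0 : contradiction *)
    exfalso. assert (Ea : W' m1 0%nat = qscale (h1/u0) (W m1 0%nat)).
    { apply (solve1 _ _ _ _ (W' m1 1%nat)); [rewrite U1; apply E1; auto | lra]. }
    pose proof (E2 m1 Hm1) as E. rewrite <- V1, L_r0, Ea in E.
    assert (E' : qadd (qscale 0 (W m1 0%nat)) (qscale h2 (W m1 1%nat)) =
       qadd (qscale (v0 * (h1/u0)) (W m1 0%nat)) (qscale 0 (W m1 1%nat))).
    { rewrite L_l0, L_r0, E. apply quat_eq; simpl; ring. }
    destruct (IND1 _ _ _ _ E'). lra.
  -
    assert (EA : forall m, (m < M)%nat -> W' m 0%nat = qscale (h1/u0) (W m 0%nat)).
    { intros m Hm. apply (solve1 _ _ _ _ (W' m 1%nat)); [rewrite U1; apply E1; auto | lra]. }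
    assert (EB : forall m, (m < M)%nat -> W' m 1%nat = qscale (h2/v1) (W m 1%nat)).
    { intros m Hm. apply (solve2 _ _ _ (W' m 0%nat)); [rewrite V0; apply E2; auto | lra]. }
    exists (fun p => match p with O => h1/u0 | _ => h2/v1 end), (fun q => q).
    split; [|split; [|split]].
    + intros p _; destruct p; apply Rdiv_lt_0_compat; lra.
    + split; intros; lia.
    + intros m q Hm Hq; destruct q as [|[|q]]; [apply EA; auto|apply EB; auto|lia].
    + intros q n Hq Hn. pose proof (Heq m1 n Hm1 Hn) as E.
      rewrite !mm2, (EA m1 Hm1), (EB m1 Hm1), L_id in E.
      destruct (IND1 _ _ _ _ E) as [A B].
      destruct q as [|[|q]]; [rewrite A|rewrite B|lia]; field; lra.
  -
    assert (EB : forall m, (m < M)%nat -> W' m 1%nat = qscale (h1/u1) (W m 0%nat)).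
    { intros m Hm. apply (solve2 _ _ _ (W' m 0%nat)); [rewrite U0; apply E1; auto | lra]. }
    assert (EA : forall m, (m < M)%nat -> W' m 0%nat = qscale (h2/v0) (W m 1%nat)).
    { intros m Hm. apply (solve1 _ _ _ _ (W' m 1%nat)); [rewrite V1; apply E2; auto | lra]. }
    exists (fun p => match p with O => h1/u1 | _ => h2/v0 end),
           (fun q => match q with O => 1%nat | _ => 0%nat end).
    split; [|split; [|split]].
    + intros p _; destruct p; apply Rdiv_lt_0_compat; lra.
    + split.
      * intros p Hp; destruct p as [|[|p]]; lia.
      * intros p q Hp Hq; destruct p as [|[|p]]; destruct q as [|[|q]]; simpl; intros; lia.
    + intros m q Hm Hq; destruct q as [|[|q]]; [apply EA; auto|apply EB; auto|lia].
    + intros q n Hq Hn. pose proof (Heq m1 n Hm1 Hn) as E.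
      rewrite !mm2, (EA m1 Hm1), (EB m1 Hm1), L_sw in E.
      destruct (IND1 _ _ _ _ E) as [A B].
      destruct q as [|[|q]]; [rewrite B|rewrite A|lia]; field; lra.
  - (* u0=0, u1>0, v0=0, v1>0 : contradiction *)
    exfalso. assert (Eb : W' m1 1%nat = qscale (h1/u1) (W m1 0%nat)).
    { apply (solve2 _ _ _ (W' m1 0%nat)); [rewrite U0; apply E1; auto | lra]. }
    pose proof (E2 m1 Hm1) as E. rewrite <- V0, L_l0, Eb in E.
    assert (E' : qadd (qscale 0 (W m1 0%nat)) (qscale h2 (W m1 1%nat)) =
       qadd (qscale (v1 * (h1/u1)) (W m1 0%nat)) (qscale 0 (W m1 1%nat))).
    { rewrite L_l0, L_r0, E. apply quat_eq; simpl; ring. }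
    destruct (IND1 _ _ _ _ E'). lra.
Qed.
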